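(* Let $F$ be a tame Dirichlet species with $F(1)=\emptyset$ (i.e. $F$ is empty on one-element sets). Then the Dirichlet exponential $\exp_D(F)$ is tame and its Dirichlet series satisfies $\widehat{\exp_D(F)}=\exp(\widehat{F})$.
   Context: A species is a functor from the groupoid of finite sets and bijections to $\mathbf{Set}$; it is tame if all its values are finite; a Dirichlet species is one with $F(\emptyset)=\emptyset$. For a tame species $F$, $\widehat{F}(s)=\sum_{n\ge1}\frac{|F(n)|}{n!}n^{-s}$ (formal Dirichlet series), with $F(n)$ the value on an $n$-element set. Formal Dirichlet series multiply by Dirichlet convolution of coefficients, and for $f$ with vanishing coefficient of $1^{-s}$, $\exp(f)=\sum_{m\ge0}f^m/m!$. Dirichlet product: a cartesian decomposition of a finite set $S$ is an ordered pair $(\pi_1,\pi_2)$ of equivalence relations on $S$ such that each $\pi_1$-class meets each $\pi_2$-class in exactly one element; with $S_i$ the set of $\pi_i$-classes, $(F\cdot_D G)(S)=\coprod_{(\pi_1,\pi_2)}F(S_1)\times G(S_2)$. This is symmetric monoidal on Dirichlet species with unit $I$, where $I(S)$ is a singleton if $|S|=1$ and empty otherwise. Dirichlet exponential: $F^n_D=F\cdot_D\cdots\cdot_D F$ ($n$ factors) for $n\ge1$, $F^0_D=I$; the symmetric group $S_n$ acts on $F^n_D$ via the symmetry of $\cdot_D$ (permuting the factors); $\exp_D(F)=\coprod_{n\ge0}F^n_D/S_n$, quotients and coproducts computed pointwise. *)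

(* Defs.v *)
From mathcomp Require Import all_boot all_algebra perm.
Set Implicit Arguments.
Unset Strict Implicit.
Unset Printing Implicit Defensive.
Import GRing.Theory.

Record species := Species {
  sp_obj :> finType -> Type;
  sp_map : forall (A B : finType) (f : A -> B), bijective f -> sp_obj A -> sp_obj B;
  sp_map_id : forall (A : finType) (h : bijective (@id A)) (x : sp_obj A),
      sp_map h x = x;
  sp_map_comp : forall (A B C : finType) (f : A -> B) (g : B -> C)
      (hf : bijective f) (hg : bijective g) (hgf : bijective (g \o f))
      (x : sp_obj A), sp_map hgf x = sp_map hg (sp_map hf x)
}.

Definition has_card (X : Type) (n : nat) : Prop :=
  exists f : X -> 'I_n, bijective f.

Definition is_finite (X : Type) : Prop := exists n, has_card X n.

Definition tame_fam (G : finType -> Type) : Prop :=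
  forall S : finType, is_finite (G S).

Definition tame (F : species) : Prop := tame_fam F.

Definition dirichlet (F : species) : Prop :=
  forall S : finType, #|S| = 0 -> F S -> False.

Definition classes (S : finType) (r : rel S) : {set {set S}} :=
  [set [set y | r x y] | x : S].

Definition classT (S : finType) (r : rel S) : finType :=
  {X : {set S} | X \in classes r}.

(* n-fold cartesian decomposition (pi_1, ..., pi_n) of S: each pi_i an
   equivalence relation, and any choice of one pi_i-class for each i meets in
   exactly one element (i.e. S -> prod_i S/pi_i is a bijection). *)
Definition cartdec (n : nat) (S : finType) (d : 'I_n -> rel S) : Prop :=
  [/\ forall i, equivalence_rel (d i),
      forall x y : S, (forall i, d i x y) -> x = y
    & forall y : 'I_n -> S, exists x : S, forall i, d i x (y i)].

Definition rawD (F : species) (n : nat) (S : finType) : Type :=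
  {d : 'I_n -> rel S & forall i : 'I_n, F (classT (d i))}.

Definition powD (F : species) (n : nat) (S : finType) : Type :=
  {p : rawD F n S | cartdec (projT1 p)}.

Definition permD (F : species) (n : nat) (S : finType) (s : 'S_n)
    (p : rawD F n S) : rawD F n S :=
  existT (fun d : 'I_n -> rel S => forall i : 'I_n, F (classT (d i)))
    (fun i => projT1 p (s i)) (fun i => projT2 p (s i)).

Definition orbD (F : species) (n : nat) (S : finType) (p q : powD F n S) : Prop :=
  exists s : 'S_n, proj1_sig q = permD s (proj1_sig p).

(* quotient of a type by a relation (set of equivalence classes) *)
Definition quot (X : Type) (R : X -> X -> Prop) : Type :=
  {P : X -> Prop | exists x : X, P = R x}.

Definition expD (F : species) (S : finType) : Type :=
  {n : nat & quot (@orbD F n S)}.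

(* f n is the coefficient of n^{-s}, for n >= 1 (index 0 is ignored). *)
Definition dser := nat -> rat.

Definition dmul (f g : dser) : dser :=
  fun n => (\sum_(d <- divisors n) f d * g (n %/ d)%N)%R.

Definition dunit : dser := fun n => ((n == 1)%:R)%R.

Definition dpow (f : dser) (m : nat) : dser := iter m (dmul f) dunit.

(* exp(f) = sum_{m>=0} f^m/m!; when f 1 = 0 the coefficient of n^{-s} in f^m
   vanishes for m > n, so the coefficientwise sum is finite. *)
Definition dexp (f : dser) : dser :=
  fun n => (\sum_(m < n.+1) dpow f m n / (m`!)%:R)%R.

(* Main.v *)
Require Import Defs.
From mathcomp Require Import all_boot all_algebra perm.
From Stdlib Require Import ClassicalEpsilon ProofIrrelevance FunctionalExtensionality PropExtensionality Eqdep.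
Set Implicit Arguments.
Unset Strict Implicit.
Unset Printing Implicit Defensive.

Module PartA.

Definition asb (P : Prop) : bool :=
  if excluded_middle_informative P then true else false.

Lemma asbP (P : Prop) : reflect P (asb P).
Proof. by rewrite /asb; case: excluded_middle_informative => h; constructor. Qed.

Definition surj (X Y : Type) (f : X -> Y) := forall y, exists x, f x = y.

Lemma hc_bij (X Y : Type) (n : nat) (f : X -> Y) :
  has_card X n -> injective f -> surj f -> has_card Y n.
Proof.
move=> [h [h' hh' h'h]] fi fs.
pose g y := proj1_sig (constructive_indefinite_description _ (fs y)).
have fg : forall y, f (g y) = y.
  by move=> y; rewrite /g; case: constructive_indefinite_description.
exists (h \o g); exists (f \o h') => y /=.
  by rewrite hh' fg.
by rewrite /= (fi _ _ (fg (f (h' y)))) h'h.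
Qed.

Lemma hc_fin (T : finType) : has_card T #|T|.
Proof. exists enum_rank; exact: enum_rank_bij. Qed.

Lemma hc_uniq X n m : has_card X n -> has_card X m -> n = m.
Proof.
move=> [f [f' ff' f'f]] [g [g' gg' g'g]].
have b : bijective (g \o f').
  by exists (f \o g') => x /=; rewrite ?gg' ?f'f ?g'g ?ff'.
by have := bij_eq_card b; rewrite !card_ord.
Qed.

Lemma hc_empty X : (X -> False) -> has_card X 0.
Proof.
move=> e; exists (fun x => match e x with end).
have k : 'I_0 -> X by case.
by exists k => [x|[]//]; case: (e x).
Qed.

Lemma hc0_empty X : has_card X 0 -> X -> False.
Proof. by move=> [f _] x; case: (f x). Qed.

Definition bij_sig (A B : Type) (f : A -> B) (h : bijective f) :
  {g : B -> A | cancel f g /\ cancel g f}.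
Proof.
apply: constructive_indefinite_description.
by case: h => g h1 h2; exists g.
Defined.

Definition hc_pick X n (h : has_card X n) : {f : X -> 'I_n | bijective f}.
Proof. exact: constructive_indefinite_description _ h. Defined.

Lemma hc_sigma (T : finType) (Y : T -> Type) (c : T -> nat) :
  (forall t, has_card (Y t) (c t)) ->
  has_card {t : T & Y t} (\sum_(t : T) c t).
Proof.
move=> hY.
pose g t := proj1_sig (hc_pick (hY t)).
have gb t : bijective (g t) by rewrite /g; case: hc_pick.
pose ginv t := proj1_sig (bij_sig (gb t)).
have ginvK t : cancel (g t) (ginv t) /\ cancel (ginv t) (g t).
  by rewrite /ginv; case: bij_sig.
pose M := {t : T & 'I_(c t)}.
have cM : #|{: M}| = \sum_t c t.
  by rewrite card_tagged sumnE big_map big_enum /=; apply: eq_bigr => t _; rewrite card_ord.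
rewrite -cM.
apply: (@hc_bij M _ _ (fun m => existT Y (tag m) (ginv (tag m) (tagged m)))).
- exact: hc_fin.
- case=> t i [t' i'] /= E.
  have Et : t = t' by exact: (f_equal (@projT1 _ _) E).
  subst t'.
  have := inj_pair2 _ _ _ _ _ E => E2.
  have : i = i' by rewrite -[i](proj2 (ginvK t)) -[i'](proj2 (ginvK t)) E2.
  by move=> ->.
- case=> t y; exists (existT _ t (g t y)) => /=.
  by rewrite (proj1 (ginvK t)).
Qed.

Lemma hc_prod (m : nat) (Y : 'I_m -> Type) (c : 'I_m -> nat) :
  (forall i, has_card (Y i) (c i)) ->
  has_card (forall i, Y i) (\prod_(i < m) c i).
Proof.
move=> hY.
pose g t := proj1_sig (hc_pick (hY t)).
have gb t : bijective (g t) by rewrite /g; case: hc_pick.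
pose ginv t := proj1_sig (bij_sig (gb t)).
have ginvK t : cancel (g t) (ginv t) /\ cancel (ginv t) (g t).
  by rewrite /ginv; case: bij_sig.
pose M := {dffun forall i : 'I_m, 'I_(c i)}.
have cM : #|{: M}| = \prod_i c i.
  by rewrite card_dep_ffun foldrE big_map big_enum /=; apply: eq_bigr => t _; rewrite card_ord.
rewrite -cM.
apply: (@hc_bij M _ _ (fun p i => ginv i (p i))).
- exact: hc_fin.
- move=> p q E; apply/ffunP => i.
  have := f_equal (fun h => h i) E => /= E2.
  by rewrite -[p i](proj2 (ginvK i)) -[q i](proj2 (ginvK i)) E2.
- move=> y; exists [ffun i => g i (y i)].
  apply: functional_extensionality_dep => i /=.
  by rewrite ffunE (proj1 (ginvK i)).
Qed.

Lemma hc_pair X Y n m : has_card X n -> has_card Y m -> has_card (X * Y) (n * m).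
Proof.
move=> [f fb] [g gb].
case: (bij_sig fb) => f' [ff' f'f]; case: (bij_sig gb) => g' [gg' g'g].
have := hc_fin ('I_n * 'I_m)%type; rewrite card_prod !card_ord => h.
apply: (hc_bij (f := fun p => (f' p.1, g' p.2)) h).
- by case=> a b [a' b'] [] /(can_inj f'f) -> /(can_inj g'g) ->.
- by case=> x y; exists (f x, g y) => /=; rewrite ff' gg'.
Qed.

Lemma hc_inj_fin X Y (f : Y -> X) : is_finite X -> injective f -> is_finite Y.
Proof.
move=> [n [h hb]] fi.
pose P (i : 'I_n) := asb (exists y, h (f y) = i).
pose J := {i : 'I_n | P i}.
have pick (j : J) : {y : Y | h (f y) = val j}.
  apply: constructive_indefinite_description; exact/asbP/(valP j).
exists #|{: J}|.
apply: (hc_bij (f := fun j => proj1_sig (pick j)) (hc_fin _)).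
- move=> j j' E; apply: val_inj.
  by case: (pick j) E => y hy; case: (pick j') => y' hy' /= E; rewrite -hy -hy' E.
- move=> y.
  have Pj : P (h (f y)) by apply/asbP; exists y.
  exists (exist (fun i => P i) _ Pj); case: (pick _) => y' /= hy'.
  by apply: fi; case: hb => h' hh' _; rewrite -(hh' (f y')) hy' hh'.
Qed.

Lemma hc_surj_fin X Y (f : X -> Y) : is_finite X -> surj f -> is_finite Y.
Proof.
move=> hX fs.
pose g y := proj1_sig (constructive_indefinite_description _ (fs y)).
have fg : forall y, f (g y) = y.
  by move=> y; rewrite /g; case: constructive_indefinite_description.
apply: (hc_inj_fin (f := g) hX).
by move=> y y' E; rewrite -(fg y) -(fg y') E.
Qed.

Lemma hc_prod_inv X Y k p : has_card (X * Y) p -> has_card Y k -> 0 < k ->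
  exists q, has_card X q /\ q * k = p.
Proof.
move=> hp hy kp.
case: hy => [g gb]; case: (bij_sig gb) => g' [gg' g'g].
have hX : is_finite X.
  apply: (hc_inj_fin (f := fun x => (x, g' (Ordinal kp)))); first by exists p.
  by move=> x x' [].
case: hX => q hq; exists q; split => //.
apply: hc_uniq (hc_pair hq _) hp.
by exists g.
Qed.

End PartA.
Import PartA.

Module PartB.

Lemma sp_map_ext (F : species) (A B : finType) (f g : A -> B)
   (hf : bijective f) (hg : bijective g) (x : F A) : f = g -> sp_map hf x = sp_map hg x.
Proof. by move=> E; subst g; rewrite (proof_irrelevance _ hf hg). Qed.

Lemma sp_map_inj (F : species) (A B : finType) (f : A -> B) (hf : bijective f) :
  injective (@sp_map F A B f hf).
Proof.
case: (bij_sig hf) => g [fg gf].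
have hg : bijective g by exists f.
have hgf : bijective (g \o f) by exists (g \o f) => x /=; rewrite fg fg.
have hid : bijective (@id A) by exists id.
move=> x y E.
have := f_equal (sp_map hg) E; rewrite -!(sp_map_comp hf hg hgf).
have e : g \o f = id by apply: functional_extensionality => z /=; rewrite fg.
by rewrite !(sp_map_ext _ hid _ e) !sp_map_id.
Qed.

Lemma sp_map_surj (F : species) (A B : finType) (f : A -> B) (hf : bijective f) :
  surj (@sp_map F A B f hf).
Proof.
case: (bij_sig hf) => g [fg gf].
have hg : bijective g by exists f.
have hfg : bijective (f \o g) by exists (f \o g) => x /=; rewrite gf gf.
have hid : bijective (@id B) by exists id.
move=> y; exists (sp_map hg y).
rewrite -(sp_map_comp hg hf hfg).
have e : f \o g = id by apply: functional_extensionality => z /=; rewrite gf.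
by rewrite (sp_map_ext _ hid _ e) sp_map_id.
Qed.

Lemma F_card (F : species) (a : nat -> nat) :
  (forall n, has_card (F 'I_n) (a n)) ->
  forall A : finType, has_card (F A) (a #|A|).
Proof.
move=> ha A.
exact: (hc_bij (ha #|A|) (@sp_map_inj F _ _ _ (@enum_val_bij A)) (@sp_map_surj F _ _ _ (@enum_val_bij A))).
Qed.

End PartB.
Import PartB.

Module PartC.
Import GRing.Theory.
Local Open Scope ring_scope.

Definition consf (T : Type) m (t : T) (k : {ffun 'I_m -> T}) : {ffun 'I_m.+1 -> T} :=
  [ffun i => if unlift ord0 i is Some j then k j else t].

Lemma consf0 (T : Type) m t (k : {ffun 'I_m -> T}) : consf t k ord0 = t.
Proof. by rewrite ffunE unlift_none. Qed.

Lemma consfS (T : Type) m t (k : {ffun 'I_m -> T}) j : consf t k (lift ord0 j) = k j.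
Proof. by rewrite ffunE liftK. Qed.

Lemma sum_divisors_ord (g : nat -> rat) (N B : nat) : (0 < N)%N -> (N <= B)%N ->
  \sum_(d <- divisors N) g d = \sum_(t < B.+1 | (t : nat) \in divisors N) g t.
Proof.
move=> N0 NB.
rewrite -(big_mkord (fun t => t \in divisors N)) -big_filter.
apply: perm_big; apply: uniq_perm.
- exact: divisors_uniq.
- by rewrite filter_uniq // iota_uniq.
move=> d; rewrite mem_filter mem_iota /= add0n.
case dd: (d \in divisors N) => //=; symmetry.
rewrite -dvdn_divisors // in dd.
by rewrite ltnS (leq_trans (dvdn_leq N0 dd) NB).
Qed.

Lemma dpow_tuples (f : dser) m B N : (0 < N)%N -> (N <= B)%N ->
  dpow f m N = \sum_(k : {ffun 'I_m -> 'I_B.+1} | (\prod_i (k i : nat) == N)%N)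
                   \prod_i f (k i).
Proof.
elim: m N => [|m IH] N N0 NB.
  rewrite /dpow /= /dunit.
  under eq_bigl do rewrite big_ord0.
  under eq_bigr do rewrite big_ord0.
  rewrite eq_sym; case: (1 == N)%N => /=; last by rewrite big_pred0.
  by rewrite sumr_const; change (1 = #|{ffun 'I_0 -> 'I_B.+1}|%:R :> rat); rewrite card_ffun card_ord card_ord.
change (dmul f (dpow f m) N = \sum_(k : {ffun 'I_m.+1 -> 'I_B.+1} | (\prod_i (k i : nat) == N)%N) \prod_i f (k i)); rewrite /dmul.
rewrite (sum_divisors_ord _ N0 NB).
pose h (p : 'I_B.+1 * {ffun 'I_m -> 'I_B.+1}) := consf p.1 p.2.
have hb : bijective h.
  apply: (@Bijective _ _ h (fun k : {ffun 'I_m.+1 -> 'I_B.+1} => (k ord0, [ffun j : 'I_m => k (lift ord0 j)]))).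
    by case=> t k; rewrite /h /= consf0; congr pair; apply/ffunP => j; rewrite ffunE consfS.
  move=> k; apply/ffunP => i; rewrite /h /= ffunE.
  by case: unliftP => [j ->|->]; rewrite ?ffunE.
rewrite (reindex h); last by apply: onW_bij.
under eq_bigl do rewrite big_ord_recl /h consf0; under eq_bigl => p do under eq_bigr do rewrite consfS.
under eq_bigr => p _ do rewrite big_ord_recl /h consf0.
under eq_bigr => p _ do under eq_bigr do rewrite consfS.
rewrite -(pair_big_dep xpredT (fun (t : 'I_B.+1) (k : {ffun 'I_m -> 'I_B.+1}) => (t * \prod_(i < m) k i)%N == N)
    (fun (t : 'I_B.+1) (k : {ffun 'I_m -> 'I_B.+1}) => f t * \prod_(i < m) f (k i))) /=.
rewrite [in RHS](bigID (fun t : 'I_B.+1 => (t : nat) \in divisors N)) /=.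
rewrite [X in _ = _ + X]big1 ?addr0; last first.
  move=> t tN; rewrite big_pred0 // => k; apply/negbTE; apply: contra tN => /eqP E.
  by rewrite -dvdn_divisors // -E dvdn_mulr.
apply: eq_bigr => t tN.
have td : (t %| N)%N by rewrite dvdn_divisors.
have t0 : (0 < t)%N by move: td; case: (t : nat) => // ; rewrite dvd0n => /eqP E; move: N0; rewrite E.
rewrite (IH (N %/ t)%N); first last.
- by rewrite (leq_trans (leq_div _ _) NB).
- by rewrite divn_gt0 // dvdn_leq.
rewrite big_distrr /=; apply: eq_bigl => k.
apply/eqP/eqP => [E|E]; first by rewrite E mulnC divnK.
by rewrite -E mulKn.
Qed.

End PartC.
Import PartC.

Module PartD.

Section Count.
Variables (S : finType) (m : nat).
Local Notation N := #|S|.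
Hypothesis N0 : 0 < N.
Local Notation T := 'I_N.+1.
Local Notation K := {ffun 'I_m -> T}.
Local Notation Phi := {ffun 'I_m -> {ffun S -> T}}.
Local Notation D := {ffun 'I_m -> {ffun (S * S)%type -> bool}}.

Definition dec (x : D) (i : 'I_m) : rel S := fun u v => x i (u, v).
Definition joint (phi : Phi) (u : S) : K := [ffun i => phi i u].
Definition V (k : K) (phi : Phi) : bool :=
  [&& [forall i, forall u, phi i u < k i], injectiveb (joint phi) &
      [forall t : K, [forall i, t i < k i] ==> [exists u, joint phi u == t]]].
Definition ker1 (psi : {ffun S -> T}) : {ffun (S * S)%type -> bool} :=
  [ffun p => psi p.1 == psi p.2].
Definition ker (phi : Phi) : D := [ffun i => ker1 (phi i)].
Definition cd (x : D) : bool := asb (cartdec (dec x)).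
Definition kk (x : D) (i : 'I_m) : nat := #|classes (dec x i)|.


Lemma VP (k : K) (phi : Phi) : reflect
  [/\ forall i u, phi i u < k i, injective (joint phi) &
      forall t : K, (forall i, t i < k i) -> exists u, joint phi u = t] (V k phi).
Proof.
apply: (iffP and3P) => [[/forallP h1 /injectiveP h2 /forallP h3]|[h1 h2 h3]]; split.
- by move=> i u; have /forallP := h1 i; apply.
- exact: h2.
- move=> t ht; have := h3 t; rewrite (_ : [forall i, t i < k i] = true) /=; last exact/forallP.
  by case/existsP => u /eqP; exists u.
- by apply/forallP => i; apply/forallP => u; apply: h1.
- exact/injectiveP.
- apply/forallP => t; apply/implyP => /forallP /h3 [u hu]; apply/existsP; exists u.
  exact/eqP.
Qed.

Lemma dec_ker phi i u v : dec (ker phi) i u v = (phi i u == phi i v).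
Proof. by rewrite /dec !ffunE. Qed.

Lemma V_cd k phi : V k phi -> cartdec (dec (ker phi)).
Proof.
case/VP => hb hi hs; split.
- by move=> i x y z; rewrite !dec_ker eqxx; split=> // /eqP ->.
- move=> u v h; apply: hi; apply/ffunP => i; rewrite !ffunE; apply/eqP; by rewrite -dec_ker.
- move=> y; have [|u hu] := hs [ffun i => phi i (y i)].
    by move=> i; rewrite ffunE.
  exists u => i; rewrite dec_ker; have := congr1 (fun t : K => t i) hu.
  by rewrite !ffunE => ->.
Qed.

Lemma V_img k phi : V k phi -> forall i, [set phi i u | u : S] = [set j : T | j < k i].
Proof.
case/VP => hb hi hs i; apply/setP => j; rewrite inE; apply/imsetP/idP.
  by case => u _ ->.
case/card_gt0P: N0 => u0 _ jk.
have [|u hu] := hs [ffun i' => if i' == i then j else phi i' u0].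
  by move=> i'; rewrite ffunE; case: eqP => [->|_].
exists u => //; have := congr1 (fun t : K => t i) hu.
by rewrite !ffunE eqxx.
Qed.

Lemma classes_ker (r : rel S) (psi : S -> T) : r =2 (fun u v => psi u == psi v) ->
  #|classes r| = #|[set psi u | u : S]|.
Proof.
move=> hr; pose g (t : T) := [set y | t == psi y].
have -> : classes r = [set g t | t in [set psi u | u : S]].
  rewrite -imset_comp /classes; apply: eq_imset => u /=.
  by apply/setP => y; rewrite !inE hr.
apply: card_in_imset => t1 t2 /imsetP [u1 _ ->] _ E.
have : u1 \in g (psi u1) by rewrite inE.
by rewrite E inE => /eqP.
Qed.

Lemma kk_ker k phi : V k phi -> forall i, kk (ker phi) i = k i.
Proof.
move=> hV i; rewrite /kk (classes_ker (psi := phi i)); last by move=> u v; rewrite dec_ker.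
rewrite (V_img hV).
have kN : k i <= N.+1 by exact: ltnW (ltn_ord _).
have wi : injective (widen_ord kN) by move=> a b E; apply: val_inj; exact: (congr1 val E).
transitivity #|'I_(k i)|; last exact: card_ord.
rewrite -(card_imset _ wi).
apply: eq_card => j; rewrite !inE; apply/idP/imsetP => [jk|[j' _ ->]] //.
by exists (Ordinal jk) => //; apply: val_inj.
exact: ltn_ord j'.
Qed.


Lemma card_lt (c : nat) : c <= N -> #|[set j : T | j < c]| = c.
Proof.
move=> cN; have kN : c <= N.+1 by exact: leqW.
have wi : injective (widen_ord kN) by move=> a b E; apply: val_inj; exact: (congr1 val E).
transitivity #|'I_c|; last exact: card_ord.
rewrite -(card_imset _ wi).
apply: eq_card => j; rewrite !inE; apply/idP/imsetP => [jk|[j' _ ->]] //.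
  by exists (Ordinal jk) => //; apply: val_inj.
exact: ltn_ord j'.
Qed.

Lemma classes_le (r : rel S) : #|classes r| <= N.
Proof. exact: leq_imset_card. Qed.

Section Aset.
Variables (r : rel S) (xr : {ffun (S * S)%type -> bool}).
Hypothesis req : equivalence_rel r.
Hypothesis hxr : forall u v, xr (u, v) = r u v.
Local Notation c := #|classes r|.
Local Notation C := (classT r).

Definition cls (u : S) : C := exist (fun X => X \in classes r) [set y | r u y]
  (ltac:(by apply/imsetP; exists u)).

Lemma cls_eq u v : (cls u == cls v) = r u v.
Proof.
apply/eqP/idP => [E|ruv].
  have := congr1 val E => /= E2.
  have : v \in [set y | r v y] by rewrite inE (req v v v).1.
  by rewrite -E2 inE.
apply: val_inj => /=; apply/setP => y; rewrite !inE.
by have := (req u v y).2 ruv.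
Qed.

Lemma cls_surj (X : C) : exists u, X = cls u.
Proof.
case: X => X hX; case/imsetP: (hX) => u _ E; exists u; apply: val_inj => /=.
by rewrite E.
Qed.

Definition Aset1 : {set {ffun S -> T}} :=
  [set psi | (ker1 psi == xr) && ([set psi u | u : S] == [set j : T | j < c])].

Lemma card_Aset1 : #|Aset1| = c`!.
Proof.
have cC : #|{: C}| = c by rewrite card_sig; apply: eq_card => X; rewrite !inE.
pose Inj := [set g : {ffun C -> T} in ffun_on (mem [set j : T | j < c]) | injectiveb g].
have cInj : #|Inj| = c`! by rewrite card_inj_ffuns_on (card_lt (classes_le r)) cC ffactnn.
pose G (g : {ffun C -> T}) : {ffun S -> T} := [ffun u => g (cls u)].
have Gi : injective G.
  move=> g1 g2 E; apply/ffunP => X; case: (cls_surj X) => u ->.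
  by have := congr1 (fun h : {ffun S -> T} => h u) E; rewrite !ffunE.
rewrite -cInj -(card_imset _ Gi); apply: eq_card => psi.
rewrite [in LHS]inE; apply/andP/imsetP; last first.
  case=> g; rewrite inE => /andP [/ffun_onP gr /injectiveP gi] ->.
  have ker : ker1 (G g) = xr.
    apply/ffunP => [[u v]]; rewrite !ffunE /= hxr (inj_eq gi).
    exact: cls_eq.
  rewrite ker eqxx; split => //.
  rewrite eqEcard; apply/andP; split.
    by apply/subsetP => j /imsetP [u _ ->]; rewrite ffunE; apply: gr.
  have cimg : #|[set G g u | u : S]| = c.
    transitivity #|[set g X | X : C]|; last by rewrite card_imset // cC.
    apply: eq_card => j; apply/imsetP/imsetP => [[u _ ->]|[X _ ->]].
      by exists (cls u) => //; rewrite ffunE.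
    by case: (cls_surj X) => u ->; exists u => //; rewrite ffunE.
  by rewrite cimg (card_lt (classes_le r)).
case=> /eqP ker /eqP img.
case/card_gt0P: N0 => u0 _.
pose g : {ffun C -> T} := [ffun X : C => if [pick y in val X] is Some y then psi y else psi u0].
have gcls u : g (cls u) = psi u.
  rewrite ffunE; case: pickP => [y /= hy|/(_ u) /=]; last by rewrite inE (req u u u).1.
  rewrite inE in hy; apply/eqP; rewrite eq_sym.
  by have := congr1 (fun h : {ffun (S * S)%type -> bool} => h (u, y)) ker; rewrite ffunE /= hxr hy => ->.
have Gg : G g = psi by apply/ffunP => u; rewrite ffunE gcls.
exists g => //; rewrite inE; apply/andP; split.
  apply/ffun_onP => X; case: (cls_surj X) => u ->; rewrite gcls -img.
  exact: imset_f.
apply/injectiveP => X1 X2; case: (cls_surj X1) => u1 ->; case: (cls_surj X2) => u2 ->.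
rewrite !gcls => E; apply/eqP; rewrite cls_eq -hxr -ker ffunE /=.
by rewrite E.
Qed.
End Aset.


Definition kkv (x : D) : K := [ffun i => inord (kk x i)].
Definition Aset (x : D) (i : 'I_m) := Aset1 (dec x i) (x i).

Lemma kkvE x i : (kkv x i : nat) = kk x i.
Proof. by rewrite ffunE inordK // ltnS classes_le. Qed.

Lemma fiber x : cd x -> forall k phi,
  (V k phi && (ker phi == x)) =
  (k == kkv x) && (phi \in family (fun i => [pred psi in Aset x i])).
Proof.
move/asbP => [req cinj csurj] k phi.
apply/idP/idP.
  case/andP => hV /eqP kx.
  have kE : k = kkv x.
    by apply/ffunP => i; apply: val_inj => /=; rewrite kkvE -kx (kk_ker hV).
  rewrite kE eqxx /=; apply/familyP => i; rewrite /= /Aset /Aset1 inE.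
  have -> : ker1 (phi i) = x i by rewrite -kx ffunE.
  by rewrite eqxx /= (V_img hV) -kx -/(kk (ker phi) i) (kk_ker hV).
case/andP => /eqP -> /familyP hA.
have hA' i : ker1 (phi i) = x i /\ [set phi i u | u : S] = [set j : T | j < kk x i].
  by have := hA i; rewrite /= /Aset /Aset1 inE => /andP [/eqP -> /eqP ->].
have kerE : ker phi = x by apply/ffunP => i; rewrite ffunE (hA' i).1.
have decE i u v : dec x i u v = (phi i u == phi i v).
  by rewrite /dec -(hA' i).1 ffunE.
rewrite kerE eqxx andbT; apply/VP; split.
- move=> i u; rewrite kkvE.
  have : phi i u \in [set phi i u | u : S] by exact: imset_f.
  by rewrite (hA' i).2 inE.
- move=> u v E; apply: cinj => i; rewrite decE.
  by have := congr1 (fun t : K => t i) E; rewrite !ffunE => ->.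
- move=> t ht.
  case/card_gt0P: N0 => u0 _.
  pose y i := odflt u0 [pick u | phi i u == t i].
  have hy i : phi i (y i) = t i.
    rewrite /y; case: pickP => [u /eqP //|] /=.
    have : t i \in [set phi i u | u : S] by rewrite (hA' i).2 inE -kkvE.
    by case/imsetP => u _ -> /(_ u); rewrite eqxx.
  case: (csurj y) => u hu; exists u; apply/ffunP => i; rewrite ffunE.
  by have := hu i; rewrite decE hy => /eqP.
Qed.

Lemma fiber_card x : cd x ->
  #|[set p : K * Phi | V p.1 p.2 && (ker p.2 == x)]| = (\prod_i (kk x i)`!)%N.
Proof.
move=> hx.
have -> : [set p : K * Phi | V p.1 p.2 && (ker p.2 == x)] =
    [set (kkv x, phi) | phi in family (fun i => [pred psi in Aset x i])].
  apply/setP => [[k phi]]; rewrite inE /= fiber //.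
  apply/andP/imsetP => [[/eqP -> hp]|[phi' hp [-> ->]]]; last by rewrite eqxx.
  by exists phi.
rewrite card_imset; last by move=> a b [].
rewrite card_family foldrE big_map big_enum /=; apply: eq_bigr => i _.
move/asbP: hx => [req _ _].
rewrite (eq_card (B := Aset x i)); last by move=> psi; rewrite !inE.
by apply: card_Aset1.
Qed.


Definition box (k : K) : {set K} := [set t : K | [forall i, t i < k i]].

Lemma card_box k : #|box k| = (\prod_i (k i : nat))%N.
Proof.
rewrite (eq_card (B := family (fun i => [pred j : T | j < k i]))); last first.
  by move=> t; rewrite inE; apply/forallP/familyP => h i; have := h i.
rewrite card_family foldrE big_map big_enum /=; apply: eq_bigr => i _.
transitivity #|[set j : T | j < k i]|; first by apply: eq_card => j; rewrite !inE.
by rewrite card_lt // -ltnS.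
Qed.

Definition tr (phi : Phi) : {ffun S -> K} := [ffun u => joint phi u].
Definition untr (psi : {ffun S -> K}) : Phi := [ffun i => [ffun u => psi u i]].

Lemma trK : cancel tr untr.
Proof. by move=> phi; apply/ffunP => i; apply/ffunP => u; rewrite !ffunE. Qed.
Lemma untrK : cancel untr tr.
Proof. by move=> psi; apply/ffunP => u; apply/ffunP => i; rewrite !ffunE. Qed.

Lemma jointE phi u : joint phi u = tr phi u.
Proof. by rewrite ffunE. Qed.

Lemma V_tr k phi : V k phi =
  [&& tr phi \in ffun_on (mem (box k)), injectiveb (tr phi) &
      box k \subset [set tr phi u | u : S]].
Proof.
apply/VP/and3P => [[hb hi hs]|[/ffun_onP hb /injectiveP hi /subsetP hs]]; split.
- by apply/ffun_onP => u; rewrite !ffunE inE; apply/forallP => i; rewrite ffunE.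
- by apply/injectiveP => u v; rewrite -!jointE; apply: hi.
- apply/subsetP => t; rewrite inE => /forallP /hs [u hu].
  by apply/imsetP; exists u; rewrite // -jointE.
- by move=> i u; have := hb u; rewrite inE => /forallP /(_ i); rewrite !ffunE.
- by move=> u v; rewrite !jointE; apply: hi.
- move=> t ht; have : t \in box k by rewrite inE; apply/forallP.
  by move/hs/imsetP => [u _ ->]; exists u; rewrite jointE.
Qed.

Lemma V_count k : #|[set phi : Phi | V k phi]| =
  if (\prod_i (k i : nat) == N)%N then N`! else 0.
Proof.
rewrite -card_box.
have e : #|[set phi : Phi | V k phi]| = #|[set tr phi | phi in [set phi : Phi | V k phi]]|.
  by rewrite card_imset //; apply: can_inj trK.
case: eqP => hN; last first.
  apply/eqP; rewrite cards_eq0; apply/eqP/setP => phi; rewrite !inE.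
  apply/negP => hV; apply: hN; move: hV; rewrite V_tr => /and3P [/ffun_onP hb /injectiveP hi hs].
  apply/eqP; rewrite eqn_leq; apply/andP; split.
    by have := subset_leq_card hs; rewrite card_imset.
  have hsub : [set tr phi u | u : S] \subset box k.
    by apply/subsetP => t /imsetP [u _ ->]; apply: hb.
  by have := subset_leq_card hsub; rewrite card_imset.
rewrite e; transitivity (#|box k| ^_ N); last by rewrite hN ffactnn.
rewrite -(card_inj_ffuns_on S (fun t => t \in box k)); apply: eq_card => psi.
rewrite inE; apply/imsetP/idP => [[phi]|hpsi].
  by rewrite inE V_tr => /and3P [h1 h2 _] ->; apply/andP.
exists (untr psi); rewrite ?untrK // inE V_tr untrK.
case/andP: hpsi => h1 h2; rewrite h1 h2 /=.
move/injectiveP: (h2) => hi.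
have : [set psi u | u : S] \subset box k.
  by apply/subsetP => t /imsetP [u _ ->]; apply: (ffun_onP h1).
rewrite subEproper => /orP [/eqP -> //|/proper_card].
by rewrite card_imset // hN ltnn.
Qed.


Import GRing.Theory.
Local Open Scope ring_scope.

Lemma count_identity (w : nat -> rat) :
  \sum_(x : D | cd x) \prod_i (w (kk x i) * ((kk x i)`!)%:R) =
  (N`!)%:R * \sum_(k : K | (\prod_i (k i : nat) == N)%N) \prod_i w (k i).
Proof.
pose Wt (p : K * Phi) := \prod_i w (p.1 i).
have H1 : \sum_(p : K * Phi | V p.1 p.2) Wt p =
    (N`!)%:R * \sum_(k : K | (\prod_i (k i : nat) == N)%N) \prod_i w (k i).
  rewrite (eq_bigl (fun p : K * Phi => xpredT p.1 && V p.1 p.2)) //.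
  rewrite -(pair_big_dep xpredT V (fun (k : K) (phi : Phi) => \prod_i w (k i))) /=.
  rewrite big_distrr /= [RHS]big_mkcond /=; apply: eq_bigr => k _.
  rewrite (eq_bigl (fun phi => phi \in [set phi : Phi | V k phi])); last by move=> phi; rewrite inE.
  rewrite sumr_const V_count; case: eqP => _; first by rewrite mulr_natl.
  by rewrite mulr0n.
rewrite -H1 (partition_big (fun p : K * Phi => ker p.2) cd) /=; last first.
  by move=> p hV; apply/asbP; exact: V_cd hV.
apply: eq_bigr => x hx.
transitivity (\sum_(p : K * Phi | V p.1 p.2 && (ker p.2 == x)) \prod_i w (kk x i)).
  rewrite big_split /= mulrC -natr_prod.
  rewrite (eq_bigl (fun p => p \in [set p : K * Phi | V p.1 p.2 && (ker p.2 == x)])); last by move=> p; rewrite inE.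
  by rewrite sumr_const fiber_card // mulr_natl.
apply: eq_bigr => p /andP [hV /eqP kx]; apply: eq_bigr => i _.
by rewrite -kx (kk_ker hV).
Qed.

End Count.

End PartD.
Import PartD.

Module PartE.

Lemma powD_card (F : species) (a : nat -> nat)
  (ha : forall n, has_card (F 'I_n) (a n)) (S : finType) (m : nat) :
  has_card (powD F m S)
    (\sum_(x : {ffun 'I_m -> {ffun (S * S)%type -> bool}} | cd x) \prod_i a (kk x i)).
Proof.
pose A : {pred {ffun 'I_m -> {ffun (S * S)%type -> bool}}} := [pred x | cd x].
pose Dt := {x : {ffun 'I_m -> {ffun (S * S)%type -> bool}} | x \in A}.
pose Y (x : Dt) := forall i, F (classT (dec (val x) i)).
have hY : forall x : Dt, has_card (Y x) (\prod_i a (kk (val x) i)).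
  move=> x; apply: hc_prod => i.
  have := F_card ha (classT (dec (val x) i)).
  by rewrite card_sig /kk (eq_card (B := classes (dec (val x) i))) // => X; rewrite !inE.
have := hc_sigma hY.
have -> : (\sum_(x : Dt) \prod_i a (kk (val x) i) =
   \sum_(x : {ffun 'I_m -> {ffun (S * S)%type -> bool}} | cd x) \prod_i a (kk x i))%N.
  by rewrite [RHS](eq_bigl (fun x => x \in A)) // [RHS]big_sub.
move=> h; apply: (hc_bij (f := fun s : {x : Dt & Y x} =>
   exist (fun p : rawD F m S => cartdec (projT1 p))
     (existT (fun d : 'I_m -> rel S => forall i, F (classT (d i))) (dec (val (projT1 s))) (projT2 s))
     (elimT (asbP _) (valP (projT1 s)))) h).
- move=> [x y] [x' y'] /= E.
  have E1 := congr1 (fun q => proj1_sig q) E; simpl in E1.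
  have E2 : dec (val x) = dec (val x') := congr1 (fun q => projT1 q) E1.
  have ex : x = x'.
    apply: val_inj; apply/ffunP => i; apply/ffunP => [[u v]].
    by have := congr1 (fun d => d i u v) E2.
  subst x'.
  by have := inj_pair2 _ _ _ _ _ E1 => ->.
- move=> [[d fs] hd].
  pose x0 : {ffun 'I_m -> {ffun (S * S)%type -> bool}} := [ffun i => [ffun p => d i p.1 p.2]].
  have hx : dec x0 = d.
    apply: functional_extensionality => i; apply: functional_extensionality => u.
    by apply: functional_extensionality => v; rewrite /dec !ffunE.
  have cx : x0 \in A by rewrite inE; apply/asbP; rewrite hx.
  have : forall d' (e : d' = d), exists g : (forall i, F (classT (d' i))),
      existT (fun d : 'I_m -> rel S => forall i, F (classT (d i))) d' g =
      existT (fun d : 'I_m -> rel S => forall i, F (classT (d i))) d fs.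
    by move=> d' e; subst d'; exists fs.
  case/(_ _ hx) => g hg.
  exists (existT Y (exist _ x0 cx) g) => /=.
  apply: eq_sig_hprop => [p|/=]; first exact: proof_irrelevance.
  exact: hg.
Qed.

End PartE.
Import PartE.

From mathcomp Require Import fingroup.

Module PartF.

Lemma hc_bij_rev (X Y : Type) (n : nat) (f : X -> Y) :
  has_card Y n -> injective f -> surj f -> has_card X n.
Proof.
move=> hY fi fs.
pose g y := proj1_sig (constructive_indefinite_description _ (fs y)).
have fg : forall y, f (g y) = y.
  by move=> y; rewrite /g; case: constructive_indefinite_description.
apply: (hc_bij (f := g) hY).
- by move=> y y' E; rewrite -(fg y) -(fg y') E.
- by move=> x; exists (f x); apply: fi; rewrite fg.
Qed.

Section Quot.
Variables (F : species) (m : nat) (S : finType).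
Hypothesis dirF : dirichlet F.
Hypothesis F1 : forall S : finType, #|S| = 1 -> F S -> False.

Lemma permD_ext (d : 'I_m -> rel S) (fs : forall i, F (classT (d i))) (h1 h2 : 'I_m -> 'I_m) :
  h1 =1 h2 ->
  existT (fun d : 'I_m -> rel S => forall i, F (classT (d i))) (fun i => d (h1 i)) (fun i => fs (h1 i)) =
  existT (fun d : 'I_m -> rel S => forall i, F (classT (d i))) (fun i => d (h2 i)) (fun i => fs (h2 i)).
Proof. by move=> /functional_extensionality E; subst h2. Qed.

Lemma permD_comp (s t : 'S_m) (p : rawD F m S) : permD s (permD t p) = permD (s * t)%g p.
Proof. by case: p => d fs; rewrite /permD /=; apply: permD_ext => i; rewrite permM. Qed.

Lemma permD1 (p : rawD F m S) : permD 1%g p = p.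
Proof.
case: p => d fs; rewrite /permD /=.
by rewrite (@permD_ext d fs (fun i => (1%g : 'S_m) i) id) // => i; rewrite perm1.
Qed.

Lemma cartdec_perm (d : 'I_m -> rel S) (s : 'S_m) : cartdec d -> cartdec (fun i => d (s i)).
Proof.
case=> [he hi hs]; split.
- by move=> i; apply: he.
- move=> x y h; apply: hi => j; have := h (s^-1 j)%g; by rewrite permKV.
- move=> y; case: (hs (fun j => y (s^-1 j)%g)) => x hx; exists x => i.
  by have := hx (s i); rewrite permK.
Qed.

Definition act (s : 'S_m) (p : powD F m S) : powD F m S :=
  exist (fun p => cartdec (projT1 p)) (permD s (proj1_sig p)) (cartdec_perm s (proj2_sig p)).

Lemma act_comp s t p : act s (act t p) = act (s * t)%g p.
Proof. by apply: eq_sig_hprop => [q|]; [exact: proof_irrelevance | exact: permD_comp]. Qed.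

Lemma act1 p : act 1%g p = p.
Proof. by apply: eq_sig_hprop => [q|]; [exact: proof_irrelevance | exact: permD1]. Qed.

Lemma orbD_act p q : orbD p q <-> exists s, q = act s p.
Proof.
split=> [[s hs]|[s ->]]; last by exists s.
by exists s; apply: eq_sig_hprop => [r|]; [exact: proof_irrelevance | exact: hs].
Qed.

Lemma two_classes (r : rel S) : equivalence_rel r -> 1 < #|classT r| ->
  exists x1 x2, ~~ r x1 x2.
Proof.
move=> req; rewrite card_sig => /card_gt1P [X [Y [hX hY XY]]].
rewrite !inE in hX hY.
case/imsetP: hX => x1 _ EX; case/imsetP: hY => x2 _ EY.
exists x1, x2; apply/negP => r12; move/eqP: XY; apply.
by rewrite EX EY; apply/setP => y; rewrite !inE; have := (req x1 x2 y).2 r12.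
Qed.

Lemma act_free s p : act s p = p -> s = 1%g.
Proof.
case: p => [[d fs] hd] E.
have Ed : (fun i => d (s i)) = d := congr1 (fun q => projT1 (proj1_sig q)) E.
have [he hi hs] := hd.
apply/permP => i; rewrite perm1; apply/eqP/negP => /negP ne.
have c2 : 1 < #|classT (d i)|.
  case: ltngtP => // h.
    by move: h; rewrite ltnS leqn0 => /eqP /dirF /(_ (fs i)).
  by have := F1 (esym h) (fs i).
case: (two_classes (he i) c2) => x1 [x2 n12].
case: (hs (fun k => if k == i then x1 else x2)) => z hz; simpl in hz.
have h1 := hz i; rewrite eqxx in h1.
have h2 := hz (s i); rewrite (negbTE ne) in h2.
have := congr1 (fun f => f i) Ed => /= Ei; rewrite Ei in h2.
move/negP: n12; apply.
by rewrite -(((he i) z x1 x2).2 h1).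
Qed.

Lemma orb_refl (x : powD F m S) : orbD x x.
Proof. by apply/orbD_act; exists 1%g; rewrite act1. Qed.

Lemma orb_sym (x y : powD F m S) : orbD x y -> orbD y x.
Proof.
case/orbD_act => s ->; apply/orbD_act; exists (s^-1)%g.
by rewrite act_comp mulVg act1.
Qed.

Lemma orb_trans (x y z : powD F m S) : orbD x y -> orbD y z -> orbD x z.
Proof.
case/orbD_act => s ->; case/orbD_act => t ->; apply/orbD_act; exists (t * s)%g.
by rewrite act_comp.
Qed.

Lemma orb_eq (x y : powD F m S) : orbD x y -> orbD x = orbD y.
Proof.
move=> hxy; apply: functional_extensionality => z; apply: propositional_extensionality.
split => h; first exact: orb_trans (orb_sym hxy) h.
exact: orb_trans hxy h.
Qed.

Lemma quot_card P : has_card (powD F m S) P ->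
  exists q, has_card (quot (@orbD F m S)) q /\ q * m`! = P.
Proof.
move=> hP.
pose Q := quot (@orbD F m S).
pose rep (c : Q) := proj1_sig (constructive_indefinite_description _ (proj2_sig c)).
have repE (c : Q) : proj1_sig c = orbD (rep c).
  by rewrite /rep; case: constructive_indefinite_description.
have hQS : has_card (Q * 'S_m) P.
  apply: (hc_bij_rev (f := fun cs : Q * 'S_m => act cs.2 (rep cs.1)) hP).
  - move=> [c s] [c' s'] /= E.
    have o : orbD (rep c) (rep c').
      apply/orbD_act; exists (s'^-1 * s)%g.
      by rewrite -act_comp E act_comp mulVg act1.
    have cc : c = c'.
      apply: eq_sig_hprop => [P'|]; first exact: proof_irrelevance.
      by rewrite !repE; apply: orb_eq.
    subst c'; congr pair.
    have : act (s'^-1 * s)%g (rep c) = rep c by rewrite -act_comp E act_comp mulVg act1.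
    move/act_free => e; rewrite -[s](mulKVg s') e mulg1 //.
  - move=> y.
    pose c : Q := exist _ (orbD y) (ex_intro _ y erefl).
    have : orbD (rep c) y by rewrite -(repE c) /=; apply: orb_refl.
    by case/orbD_act => s ->; exists (c, s).
have hS : has_card 'S_m m`! by rewrite -card_Sn; apply: hc_fin.
exact: hc_prod_inv hQS hS (fact_gt0 m).
Qed.
End Quot.

End PartF.
Import PartF.

From mathcomp Require Import ring.

Module PartG.
Import GRing.Theory Num.Theory.

Section Main.
Variables (F : species) (a : nat -> nat).
Hypothesis ha : forall n, has_card (F 'I_n) (a n).
Hypothesis dirF : dirichlet F.
Hypothesis F1 : forall S : finType, #|S| = 1 -> F S -> False.

Local Notation f := (fun k => ((a k)%:R / (k`!)%:R : rat)%R).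

Lemma a1 : a 1 = 0.
Proof. apply: hc_uniq (ha 1) (hc_empty _); apply: F1; exact: card_ord. Qed.

Lemma p_formula (S : finType) (N0 : 0 < #|S|) m :
  ((\sum_(x : {ffun 'I_m -> {ffun (S * S)%type -> bool}} | cd x) \prod_i a (kk x i))%N%:R : rat)
  = ((#|S|`!)%:R * dpow f m #|S|)%R.
Proof.
rewrite (@dpow_tuples f m #|S| #|S| N0 (leqnn _)).
have := @count_identity S m N0 (fun k => ((a k)%:R / (k`!)%:R : rat)%R).
move=> <-; rewrite natr_sum; apply: eq_bigr => x _; rewrite natr_prod.
by apply: eq_bigr => i _; rewrite divfK // pnatr_eq0 -lt0n fact_gt0.
Qed.

Lemma dpow_big (N m : nat) : 0 < N -> N <= m -> dpow f m N = 0%R.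
Proof.
move=> N0 Nm; rewrite (@dpow_tuples f m N N N0 (leqnn _)); apply: big1 => k /eqP hk.
have : ~~ [forall i, 1 < k i].
  apply/negP => /forallP h.
  have : (2 ^ m <= \prod_i (k i : nat))%N.
    have e2 : (2 ^ m = \prod_(i < m) 2)%N by rewrite prod_nat_const card_ord.
    rewrite e2; apply: leq_prod => i _; exact: h.
  rewrite hk => /(leq_trans (ltn_expl m (isT : 1 < 2))).
  by rewrite ltnNge Nm.
rewrite negb_forall => /existsP [i]; rewrite -leqNgt => ki.
have : k i != 0 :> nat.
  apply/negP => /eqP k0; move: hk N0; rewrite (bigD1 i) //= k0 mul0n => <-.
  by [].
move=> kn0; have k1 : (k i : nat) = 1 by apply/eqP; rewrite eqn_leq ki lt0n kn0.
by rewrite (bigD1 i) //= k1 a1 mulr0n !mul0r.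
Qed.

Lemma core (S : finType) (N0 : 0 < #|S|) :
  exists b, has_card (expD F S) b /\ (((b%:R / (#|S|`!)%:R) : rat) = dexp f #|S|)%R.
Proof.
pose p m := (\sum_(x : {ffun 'I_m -> {ffun (S * S)%type -> bool}} | cd x) \prod_i a (kk x i))%N.
have hp m : has_card (powD F m S) (p m) := powD_card ha S m.
have hq m : exists q, has_card (quot (@orbD F m S)) q /\ q * m`! = p m.
  exact: (@quot_card F m S dirF F1 _ (hp m)).
pose qf m := proj1_sig (constructive_indefinite_description _ (hq m)).
have qfP m : has_card (quot (@orbD F m S)) (qf m) /\ qf m * m`! = p m.
  by rewrite /qf; case: constructive_indefinite_description.
have pR m : ((p m)%:R : rat) = ((#|S|`!)%:R * dpow f m #|S|)%R := p_formula N0 m.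
have q0 m : #|S| <= m -> qf m = 0.
  move=> Nm; have := pR m; rewrite dpow_big // mulr0 => /eqP; rewrite pnatr_eq0 => /eqP p0.
  have := (qfP m).2; rewrite p0 => /eqP; rewrite muln_eq0 => /orP [/eqP //|].
  by rewrite (negbTE (lt0n_neq0 (fact_gt0 m))).
have hE : has_card (expD F S) (\sum_(n < #|S|) qf n).
  have hs := hc_sigma (T := 'I_#|S|) (Y := fun n => quot (@orbD F (val n) S)) (fun n => (qfP n).1).
  apply: (hc_bij (f := fun s : {n : 'I_#|S| & quot (@orbD F (val n) S)} =>
     existT (fun n => quot (@orbD F n S)) (val (projT1 s)) (projT2 s)) hs).
  - move=> [n c] [n' c'] /= E.
    have en : n = n' by apply: val_inj; exact: (congr1 (@projT1 _ _) E).
    subst n'; by have := inj_pair2 _ _ _ _ _ E => ->.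
  - move=> [n c]; case: (ltnP n #|S|) => nN.
      by exists (existT _ (Ordinal nN) c).
    by have := (qfP n).1; rewrite q0 // => /hc0_empty /(_ c).
exists (\sum_(n < #|S|) qf n); split => //.
rewrite /dexp big_ord_recr /= dpow_big // mul0r addr0 natr_sum mulr_suml.
apply: eq_bigr => i _.
have e := congr1 (fun n : nat => (n%:R)%R : rat) (qfP i).2; rewrite /= natrM pR in e.
have hN : ((#|S|`!)%:R : rat)%R != 0%R by rewrite pnatr_eq0 -lt0n fact_gt0.
have hm : ((i`!)%:R : rat)%R != 0%R by rewrite pnatr_eq0 -lt0n fact_gt0.
rewrite -(mulfK hm ((qf i)%:R)%R) e. field. by apply/andP.
Qed.
End Main.

Lemma powD_empty (F : species) (dirF : dirichlet F) (S : finType) n :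
  #|S| = 0 -> powD F n S -> False.
Proof.
move=> S0 [[d fs] hd] /=.
case: n d fs hd => [|n] d fs hd.
  have y : 'I_0 -> S by case.
  case: hd => _ _ /(_ y) [u _].
  by have := card0_eq S0 u.
apply: (dirF _ _ (fs ord0)); apply/eqP; rewrite -leqn0 -S0 card_sig.
rewrite (eq_card (B := Defs.classes (d ord0))); last by move=> X; rewrite !inE.
exact: classes_le.
Qed.

Lemma expD_empty (F : species) (dirF : dirichlet F) (S : finType) :
  #|S| = 0 -> has_card (expD F S) 0.
Proof.
move=> S0; apply: hc_empty => -[n [P [x _]]].
exact: (powD_empty dirF S0 x).
Qed.


End PartG.
Import PartG.

Theorem lemma3p5 (F : species) (tameF : tame F) (dirF : dirichlet F)
    (F1 : forall S : finType, #|S| = 1 -> F S -> False) :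
  tame_fam (expD F) /\
  (forall a b : nat -> nat,
     (forall n, has_card (F 'I_n) (a n)) ->
     (forall n, has_card (expD F 'I_n) (b n)) ->
     forall n, 0 < n ->
       ((b n)%:R / (n`!)%:R : rat)%R =
       dexp (fun k => ((a k)%:R / (k`!)%:R : rat)%R) n).
Proof.
split.
  move=> S.
  pose a0 n := proj1_sig (constructive_indefinite_description _ (tameF 'I_n)).
  have ha0 n : has_card (F 'I_n) (a0 n).
    by rewrite /a0; case: constructive_indefinite_description.
  case: (posnP #|S|) => [S0|N0].
    by exists 0; exact: expD_empty.
  by case: (core ha0 dirF F1 N0) => b [hb _]; exists b.
move=> a b ha hb n n0.
have N0 : 0 < #|'I_n| by rewrite card_ord.
case: (core ha dirF F1 N0) => b' [hb' e].
rewrite card_ord in e.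
by rewrite (hc_uniq (hb n) hb').
Qed.
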